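(* Let $k$ and $n$ be positive integers. Any two $n$-vertex graphs whose components are all cycles with at least $k+1$ vertices have identical $k$-decks.
   Context: The $k$-deck $\mathcal{D}_k(G)$ of a graph $G$ is the multiset of isomorphism classes of the induced subgraphs of $G$ on $k$ vertices. *)

(* Defs.v *)
From mathcomp Require Import all_boot.
Set Implicit Arguments. Unset Strict Implicit. Unset Printing Implicit Defensive.

Definition simple_graph (T : finType) (e : rel T) : Prop :=
  symmetric e /\ irreflexive e.

Definition component (T : finType) (e : rel T) (x : T) : {set T} :=
  [set y | connect e x y].

Definition is_cycle_on (T : finType) (e : rel T) (C : {set T}) : Prop :=
  exists s : seq T,
    [/\ uniq s, 2 < size s, (forall y, (y \in C) = (y \in s)) &
        (forall y z, y \in s -> e y z = (z == next s y) || (z == prev s y))].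

Definition cycles_at_least (T : finType) (e : rel T) (k : nat) : Prop :=
  forall x : T, is_cycle_on e (component e x) /\ k < #|component e x|.

Definition induced_iso (T : finType) (e : rel T) (S : {set T}) (k : nat)
  (h : rel 'I_k) : bool :=
  [exists f : {ffun 'I_k -> T},
     [&& injectiveb f, f @: setT == S &
         [forall i, forall j, e (f i) (f j) == h i j]]].

(* Multiplicity in the k-deck of the isomorphism class of h. *)
Definition deck_count (T : finType) (e : rel T) (k : nat) (h : rel 'I_k) : nat :=
  #|[set S : {set T} | (#|S| == k) && induced_iso e S h]|.

Definition same_k_deck (T1 T2 : finType) (e1 : rel T1) (e2 : rel T2) (k : nat) : Prop :=
  forall h : rel 'I_k, @deck_count T1 e1 k h = @deck_count T2 e2 k h.

(* Main.v *)
Require Import Defs.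
From mathcomp Require Import all_boot.
Set Implicit Arguments. Unset Strict Implicit. Unset Printing Implicit Defensive.


Lemma partA (T : finType) (e : rel T) k : simple_graph e -> cycles_at_least e k ->
  exists sg : T -> T, [/\ injective sg, forall x, k < order sg x &
     forall x y, e x y = (y == sg x) || (x == sg y)].
Proof.
move=> [esym eirr] H.
have symc : connect_sym e := sym_connect_sym esym.
pose cycb (C : {set T}) (s : seq T) := [&& uniq s, 2 < size s,
   [forall y, (y \in C) == (y \in s)] &
   [forall y, forall z, (y \in s) ==> (e y z == (z == next s y) || (z == prev s y))]].
have H' : forall x, exists s, cycb (component e x) s.
  move=> x; have [[s [us ss Cs es]] _] := H x; exists s; apply/and4P; split => //.
    by apply/forallP => y; rewrite Cs.
  by apply/forallP=> y; apply/forallP => z; apply/implyP => ys; rewrite es.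
pose s x := xchoose (H' x).
have sP x : cycb (component e x) (s x) := xchooseP (H' x).
have compE x y : y \in component e x -> component e y = component e x.
  rewrite inE => cxy; apply/setP => z; rewrite !inE; apply/idP/idP.
    exact: connect_trans.
  by move=> cxz; rewrite symc in cxy; exact: connect_trans cxy cxz.
have sE x y : y \in component e x -> s y = s x.
  by move=> /compE E; rewrite /s; apply: eq_xchoose => t; rewrite E.
have memS x y : (y \in s x) = (y \in component e x).
  by have /and4P[_ _ /forallP/(_ y)/eqP -> _] := sP x.
have us x : uniq (s x) by have /and4P[] := sP x.
have xs x : x \in s x by rewrite memS inE connect0.
pose sg x := next (s x) x.
have sgs x : sg x \in s x by rewrite mem_next.
have sgE x y : y \in s x -> sg y = next (s x) y.
  by move=> ys; rewrite /sg (sE x y) // -memS.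
have sginj : injective sg.
  move=> x y exy.
  have c1 : component e (sg x) = component e x by apply: compE; rewrite -memS.
  have c2 : component e (sg x) = component e y by rewrite exy; apply: compE; rewrite -memS.
  have yx : y \in s x by rewrite memS -c1 c2 inE connect0.
  by move: exy; rewrite (sgE x y yx) /sg => /(can_inj (prev_next (us x))).
exists sg; split => //.
  move=> x; have [_ Hk] := H x.
  have fc : fcycle sg (s x).
    rewrite (@eq_in_cycle _ (mem (s x)) _ (frel (next (s x)))); first exact: cycle_next.
      by move=> y z ys zs /=; rewrite (sgE x y ys).
    by apply/allP.
  rewrite (order_cycle fc (us x) (xs x)) -(card_uniqP (us x)).
  by rewrite (eq_card (memS x)) cardE (eq_card (fun y => mem_enum _ y)) in Hk || (rewrite (eq_card (memS x)); exact: Hk).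
move=> x y.
have /and4P[_ _ _ /forallP/(_ x)/forallP/(_ y)] := sP x.
rewrite xs /= => /eqP ->.
have -> : sg x = next (s x) x by []. congr (_ || _); apply/eqP/eqP => [->|xe].
  have ys : prev (s x) x \in s x by rewrite mem_prev.
  by rewrite (sgE x _ ys) next_prev.
have ys : y \in s x.
  have : x \in component e y by rewrite -memS xe sgs.
  by move=> /compE E; rewrite memS E inE connect0.
move: xe; rewrite (sgE x y ys) => ->.
by rewrite (sE x) ?(prev_next (us x)) // -memS mem_next.
Qed.


Definition ptn (I : finType) := {ffun I * I -> bool * bool}.

Section Pat.
Variables (T : finType) (e : rel T).

Definition pat (I : finType) (f : {ffun I -> T}) : ptn I :=
  [ffun xy => (f xy.1 == f xy.2, e (f xy.1) (f xy.2))].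

Definition gemb (I : finType) (p : ptn I) := #|[set f : {ffun I -> T} | pat f == p]|.

Lemma gemb_part (I : finType) (P : pred (ptn I)) :
  #|[set f : {ffun I -> T} | P (pat f)]| = \sum_(q | P q) gemb q.
Proof.
rewrite -sum1_card (eq_bigl (fun f => P (pat f))); last by move=> f; rewrite inE.
rewrite (partition_big (@pat I) P) //; apply: eq_bigr => q Pq.
rewrite /gemb -sum1_card; apply: eq_bigl => f; rewrite inE.
by case: (pat f =P q) => [->|_]; rewrite ?Pq ?andbF.
Qed.

Section Del.
Variables (I : finType) (i j : I) (hij : i != j).
Definition Isub := {x : I | x != j}.
Definition rj (x : I) : Isub := insubd (exist (fun x => x != j) i hij) x.
Lemma rjE x : val (rj x) = if x == j then i else x.
Proof. by rewrite /rj val_insubd; case: eqP. Qed.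
Definition Phi (q : ptn Isub) : ptn I := [ffun xy => q (rj xy.1, rj xy.2)].
Definition extj (g : {ffun Isub -> T}) : {ffun I -> T} := [ffun x => g (rj x)].
Definition resj (f : {ffun I -> T}) : {ffun Isub -> T} := [ffun y => f (val y)].

Lemma pat_extj g : pat (extj g) = Phi (pat g).
Proof. by apply/ffunP => xy; rewrite !ffunE. Qed.

Lemma resjK g : resj (extj g) = g.
Proof.
apply/ffunP => y; rewrite !ffunE; congr (g _); apply: val_inj.
by rewrite rjE; case: y => y /= /negPf ->.
Qed.

Lemma gemb_del (p : ptn I) : (p (i, j)).1 ->
  gemb p = #|[set g : {ffun Isub -> T} | Phi (pat g) == p]|.
Proof.
move=> pij; rewrite /gemb.
have -> : [set f : {ffun I -> T} | pat f == p] =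
          extj @: [set g : {ffun Isub -> T} | Phi (pat g) == p].
  apply/setP => f; rewrite inE; apply/eqP/imsetP => [pf | [g]].
    have fij : f i = f j.
      by move: pij; rewrite -pf ffunE /= => /eqP.
    have fE : extj (resj f) = f.
      apply/ffunP => x; rewrite !ffunE rjE; case: eqP => [->|] //.
    exists (resj f); last by [].
    by rewrite inE -pat_extj fE pf.
  by rewrite inE -pat_extj => /eqP <- ->.
by rewrite card_imset //; apply: (can_inj resjK).
Qed.
End Del.

Section Split.
Variables (I : finType) (A : {set I}) (a0 b0 : I) (ha : a0 \in A) (hb : b0 \notin A).
Definition IA := {x : I | x \in A}.
Definition IB := {x : I | x \notin A}.
Definition resA (f : {ffun I -> T}) : {ffun IA -> T} := [ffun y => f (val y)].
Definition resB (f : {ffun I -> T}) : {ffun IB -> T} := [ffun y => f (val y)].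
Definition restrA (q : ptn I) : ptn IA := [ffun xy => q (val xy.1, val xy.2)].
Definition restrB (q : ptn I) : ptn IB := [ffun xy => q (val xy.1, val xy.2)].
Lemma pat_resA f : pat (resA f) = restrA (pat f).
Proof. by apply/ffunP => xy; rewrite !ffunE. Qed.
Lemma pat_resB f : pat (resB f) = restrB (pat f).
Proof. by apply/ffunP => xy; rewrite !ffunE. Qed.

Definition glue (g : {ffun IA -> T}) (h : {ffun IB -> T}) : {ffun I -> T} :=
  [ffun x => if x \in A then g (insubd (exist _ a0 ha) x) else h (insubd (exist _ b0 hb) x)].

Lemma card_split (P : pred (ptn IA)) (Q : pred (ptn IB)) :
  #|[set f : {ffun I -> T} | P (pat (resA f)) && Q (pat (resB f))]| =
  #|[set g : {ffun IA -> T} | P (pat g)]| * #|[set h : {ffun IB -> T} | Q (pat h)]|.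
Proof.
rewrite -cardsX.
have inj : injective (fun f => (resA f, resB f)).
  move=> f1 f2 [] /ffunP E1 /ffunP E2; apply/ffunP => x.
  case: (boolP (x \in A)) => xA.
    by have := E1 (exist _ x xA); rewrite !ffunE.
  by have := E2 (exist _ x xA); rewrite !ffunE.
rewrite -(card_imset _ inj); apply: eq_card => gh; rewrite !inE.
apply/imsetP/idP => [[f]|].
  by rewrite inE => /andP[Pf Qf] ->; rewrite /= Pf Qf.
case: gh => g h /= /andP[Pg Qh].
have rA : resA (glue g h) = g.
  apply/ffunP => y; rewrite !ffunE (valP y); congr (g _); apply: val_inj.
  by rewrite val_insubd (valP y).
have rB : resB (glue g h) = h.
  apply/ffunP => y; rewrite !ffunE (negPf (valP y)); congr (h _); apply: val_inj.
  by rewrite val_insubd (valP y).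
by exists (glue g h); rewrite ?inE rA rB ?Pg ?Qh.
Qed.
End Split.
End Pat.


Definition pD k (h : rel 'I_k) : ptn 'I_k := [ffun xy => (xy.1 == xy.2, h xy.1 xy.2)].
Definition Aut k (h : rel 'I_k) := [set a : {ffun 'I_k -> 'I_k} |
   injectiveb a && [forall i, forall j, h (a i) (a j) == h i j]].

Lemma gemb_deck (T : finType) (e : rel T) k (h : rel 'I_k) :
  gemb e (pD h) = deck_count e h * #|Aut h|.
Proof.
pose V := [set f : {ffun 'I_k -> T} | injectiveb f && [forall i, forall j, e (f i) (f j) == h i j]].
have -> : gemb e (pD h) = #|V|.
  rewrite /gemb; apply: eq_card => f; rewrite !inE.
  apply/eqP/andP => [pf|[/injectiveP fi /forallP fe]].
    split.
      apply/injectiveP => x y fxy.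
      by have := congr1 (fun q : ptn 'I_k => (q (x, y)).1) pf; rewrite !ffunE /= fxy eqxx => /esym/eqP.
    apply/forallP => x; apply/forallP => y.
    by have := congr1 (fun q : ptn 'I_k => (q (x, y)).2) pf; rewrite !ffunE /= => ->.
  apply/ffunP => [[x y]]; rewrite !ffunE /=; congr pair.
    by apply/eqP/eqP => [/fi|->].
  by have /forallP/(_ y)/eqP := fe x.
rewrite -sum1_card (partition_big (fun f : {ffun 'I_k -> T} => f @: setT)
   (fun S => (#|S| == k) && induced_iso e S h)) /=; last first.
  move=> f; rewrite inE => /andP[fi fe]; apply/andP; split.
    by rewrite card_imset ?cardsT ?card_ord //; apply/injectiveP.
  by apply/existsP; exists f; rewrite fi eqxx fe.
rewrite /deck_count -sum_nat_const; apply: eq_big => [S|S /andP[_ /existsP[f0 /and3P[f0i /eqP f0S f0e]]]].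
  by rewrite inE.
have f0inj := injectiveP _ f0i.
rewrite sum1_card.
pose W := [set [ffun i => f0 (a i)] | a : {ffun 'I_k -> 'I_k} in Aut h].
rewrite (@eq_card _ _ W); last first.
  move=> f.
rewrite unfold_in /= inE [f \in W]inE.
apply/andP/imsetP => [[/andP[fi fe] /eqP fS]|[a]].
    pose a := [ffun i => odflt i [pick j | f0 j == f i]].
    have fa i : f0 (a i) = f i.
      rewrite ffunE; case: pickP => [j /eqP //|].
      have : f i \in f0 @: setT by rewrite f0S -fS imset_f.
      by case/imsetP => j _ -> /(_ j); rewrite eqxx.
    exists a; last by apply/ffunP => i; rewrite ffunE fa.
    rewrite inE; apply/andP; split.
      apply/injectiveP => x y axy; apply/(injectiveP _ fi).
      by rewrite -fa axy fa.
    apply/forallP => x; apply/forallP => y.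
    rewrite -(eqP (forallP (forallP f0e (a x)) (a y))) !fa; exact: (forallP (forallP fe x) y).
  rewrite inE => /andP[/injectiveP ai /forallP ae] ->; split.
    apply/andP; split.
      by apply/injectiveP => x y; rewrite !ffunE => /f0inj /ai.
    apply/forallP => x; apply/forallP => y; rewrite !ffunE.
    by rewrite (eqP (forallP (forallP f0e (a x)) (a y))) (forallP (ae x) y).
  have aT : a @: setT = setT.
    by apply/eqP; rewrite eqEcard subsetT (card_imset _ ai) leqnn.
  rewrite -f0S; apply/eqP/setP => z; apply/imsetP/imsetP => [[i _ ->]|[i _ ->]].
    by exists (a i); rewrite ?ffunE.
  have : i \in a @: setT by rewrite aT.
  by case/imsetP => j _ ->; exists j; rewrite ?ffunE.
rewrite card_imset //.
move=> a b /ffunP E; apply/ffunP => i; apply: f0inj; have := E i; by rewrite !ffunE.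
Qed.


Definition adjp (a b : nat) := (b == a.+1) || (a == b.+1).
Definition connb (I : finType) (E : rel I) : bool :=
  [forall A : {set I}, ((A != set0) && (A != setT)) ==>
     [exists x, exists y, [&& x \in A, y \notin A & E x y || E y x]]].
Definition cE (I : finType) (p : ptn I) :=
  #|[set d : {ffun I -> 'I_#|I|} | injectiveb d &&
      [forall x, forall y, (p (x, y)).2 == adjp (d x) (d y)]]|.

Section B.
Variables (T : finType) (e : rel T) (sg : T -> T) (k : nat).
Hypotheses (sginj : injective sg) (hord : forall x, k < order sg x)
  (he : forall x y, e x y = (y == sg x) || (x == sg y)).

Lemma iter_inj x a b : a < order sg x -> b < order sg x ->
  iter a sg x = iter b sg x -> a = b.
Proof. by move=> ha hb E; rewrite -(findex_iter ha) E findex_iter. Qed.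

Lemma esym x y : e x y = e y x.
Proof. by rewrite !he orbC. Qed.

Lemma e_iter u a b : a < k -> b < k -> e (iter a sg u) (iter b sg u) = adjp a b.
Proof.
move=> ha hb; rewrite he /adjp -!iterS.
have lt x c : c <= k -> c < order sg x by move=> h; exact: leq_ltn_trans h (hord x).
congr (_ || _); apply/eqP/eqP => [/iter_inj|->] //; apply; apply: lt => //; exact: ltnW.
Qed.

Lemma partB (I : finType) (p : ptn I) : 0 < #|I| -> #|I| <= k ->
  (forall x y, (p (x, y)).1 = (x == y)) -> connb (fun x y => (p (x, y)).2) ->
  gemb e p = #|T| * cE p.
Proof.
move=> I0 Ik pK pC.
set j := #|I| in I0 Ik *.
have ltord x c : c < j -> c < order sg x.
  by move=> h; apply: leq_trans (ltnW (hord x)); exact: leq_trans h Ik.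
pose D := [set d : {ffun I -> 'I_j} | injectiveb d &&
      [forall x, forall y, (p (x, y)).2 == adjp (d x) (d y)]].
pose enc (ud : T * {ffun I -> 'I_j}) : {ffun I -> T} := [ffun i => iter (ud.2 i) sg ud.1].
have dsurj d : d \in D -> forall t : 'I_j, exists x, d x = t.
  rewrite inE => /andP[/injectiveP di _] t.
  have : t \in d @: setT.
    have -> : d @: setT = setT.
      by apply/eqP; rewrite eqEcard subsetT (card_imset _ di) !cardsT card_ord /j leqnn.
    by rewrite in_setT.
  by case/imsetP => x _ ->; exists x.
have encP u d : d \in D -> pat e (enc (u, d)) = p.
  move=> dD; have := dD; rewrite inE => /andP[/injectiveP di /forallP dp].
  apply/ffunP => [[x y]]; rewrite !ffunE /=.
  have -> : (iter (d x) sg u == iter (d y) sg u) = (p (x, y)).1.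
    rewrite pK; apply/eqP/eqP => [/iter_inj E|->] //.
    by apply: di; apply: val_inj; apply: E; apply: ltord.
  rewrite e_iter; try (apply: leq_trans Ik; done).
  by rewrite -(eqP (forallP (dp x) y)); case: (p (x, y)).
have encI : {in setX [set: T] D &, injective enc}.
  move=> [u d] [u1 d1] /setXP[_ dD] /setXP[_ dDb] E.
  have E' x : iter (d x) sg u = iter (d1 x) sg u1.
    by have /ffunP/(_ x) := E; rewrite !ffunE.
  have [i0 di0] : exists x, d1 x = Ordinal I0 := dsurj _ dDb _.
  have uE1 : u1 = iter (d i0) sg u by rewrite E' di0.
  have uu : u = u1.
    case Ed: (nat_of_ord (d i0)) uE1 => [|t] uE1; first by rewrite uE1.
    have tj : t < j by apply: ltn_trans (ltn_ord (d i0)); rewrite Ed.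
    have [i1 di1] : exists x, d x = Ordinal tj := dsurj _ dD _.
    have := E' i1; rewrite di1 /= => Ei1.
    have : iter (d1 i1).+1 sg u1 = iter 0 sg u1.
      by rewrite iterS -Ei1 -iterS /= uE1.
    have ho : (d1 i1).+1 < order sg u1.
      by apply: leq_ltn_trans (hord u1); apply: leq_trans (ltn_ord _) Ik.
    by move/(iter_inj ho (order_gt0 sg u1)).
  rewrite -uu in E' *; congr pair; apply/ffunP => x; apply: val_inj; apply: (iter_inj (x := u)).
    exact: ltord _ _ (ltn_ord _).
    exact: ltord _ _ (ltn_ord _).
  exact: E'.
have encS : [set f : {ffun I -> T} | pat e f == p] = enc @: setX [set: T] D.
  apply/setP => f; rewrite inE; apply/eqP/imsetP => [pf|[[u d] /setXP[_ dD] ->]]; last exact: encP.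
  have fK x y : (f x == f y) = (x == y).
    by have := congr1 (fun q : ptn I => (q (x, y)).1) pf; rewrite ffunE /= pK.
  have fE x y : e (f x) (f y) = (p (x, y)).2.
    by have := congr1 (fun q : ptn I => (q (x, y)).2) pf; rewrite ffunE.
  have finj : injective f by move=> x y /eqP; rewrite fK => /eqP.
  pose S := f @: setT.
  have cS : #|S| = j by rewrite card_imset // cardsT.
  have [u uS uP] : exists2 u, u \in S & forall y, y \in S -> sg y != u.
    case: (boolP [exists u, (u \in S) && [forall y, (y \in S) ==> (sg y != u)]]).
      case/existsP => u /andP[uS /forallP uP]; exists u => // y yS.
      by have /implyP := uP y; apply.
    move/existsPn => H.
    have sub : S \subset sg @: S.
      apply/subsetP => v vS; have := H v; rewrite vS /= => /forallPn[y].
      by rewrite negb_imply negbK => /andP[yS /eqP <-]; apply: imset_f.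
    have SS : sg @: S = S.
      apply/eqP; rewrite eq_sym eqEcard sub (card_imset _ sginj) leqnn //.
    have [i0 _] : exists i0 : I, i0 \in I by apply/card_gt0P.
    pose x0 := f i0.
    have itS t : iter t sg x0 \in S.
      by elim: t => [|t IH] /=; [apply: imset_f | rewrite -SS imset_f].
    have : order sg x0 <= #|S|.
      rewrite -size_orbit -(card_uniqP (orbit_uniq _ _)); apply: subset_leq_card.
      by apply/subsetP => y /trajectP[t _ ->]; exact: itS.
    by rewrite cS leqNgt (leq_ltn_trans Ik (hord x0)).
  have arc t0 : t0 < j -> iter t0 sg u \in S.
    suff H : forall t, t <= j -> forall r, r < t -> iter r sg u \in S.
      by move=> tj; exact: H t0.+1 tj t0 (ltnSn t0).
    elim => [//|t IH] tj r rt.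
    rewrite ltnS leq_eqVlt in rt; case/predU1P: rt => [->|rt]; last exact: IH (ltnW tj) r rt.
    case: t IH tj => [|t] IH tj; first by [].
    apply/negPn/negP => nS.
    pose Arc := [set iter (nat_of_ord r) sg u | r : 'I_t.+1].
    pose A := [set x | f x \in Arc].
    have A0 : A != set0.
      have [x ux] : exists x, f x = u by case/imsetP: uS => x _ ->; exists x.
      apply/set0Pn; exists x; rewrite inE ux; apply/imsetP; exists (Ordinal (ltn0Sn t)) => //.
    have AT : A != setT.
      have cA : #|A| <= t.+1.
        rewrite -(card_imset _ finj); apply: leq_trans (subset_leq_card (B := Arc) _) _.
          by apply/subsetP => y /imsetP[x]; rewrite inE => xA ->.
        by apply: leq_trans (leq_imset_card _ _) _; rewrite card_ord.
      apply: contraTneq cA => ->; rewrite cardsT -ltnNge; exact: tj.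
    have /forallP/(_ A) := pC; rewrite A0 AT /= => /existsP[x /existsP[y /and3P[xA yA Exy]]].
    have Exy' : e (f x) (f y).
      by rewrite -!fE in Exy; case/orP: Exy => //; rewrite esym.
    move: xA yA; rewrite !inE => /imsetP[q _ fxr] yA.
    rewrite fxr he in Exy'.
    case/orP: Exy' => /eqP Hy.
      case: (ltnP q.+1 t.+1) => rt1.
        by move: yA; rewrite Hy -iterS => /negP; apply; apply/imsetP; exists (Ordinal rt1).
      have rt : q.+1 = t.+1 by apply/eqP; rewrite eqn_leq rt1 (ltn_ord q).
      by move/negP: nS; apply; rewrite -rt iterS -Hy; exact: imset_f.
    clear fxr; case: q Hy => [[|r'] hr] /= Hy.
      by have := uP (f y) (imset_f _ (in_setT y)); rewrite -Hy eqxx.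
    have Hy' : iter r' sg u = f y by apply: sginj.
    apply: (negP yA); rewrite -Hy'; apply/imsetP; exists (Ordinal (ltnW hr)) => //.
  pose Arc := [set iter (nat_of_ord r) sg u | r : 'I_j].
  have ArcS : Arc = S.
    apply/eqP; rewrite eqEcard; apply/andP; split.
      by apply/subsetP => y /imsetP[r _ ->]; apply: arc.
    rewrite cS card_imset ?card_ord //.
    by move=> a b /iter_inj E; apply: val_inj; apply: E; apply: ltord.
  pose d := [ffun x => odflt (Ordinal I0) [pick r : 'I_j | iter r sg u == f x]].
  have dE x : iter (d x) sg u = f x.
    rewrite ffunE; case: pickP => [r /eqP //|H].
    have : f x \in Arc by rewrite ArcS imset_f.
    by case/imsetP => r _ E; have := H r; rewrite E eqxx.
  exists (u, d); last by apply/ffunP => x; rewrite ffunE /= dE.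
  apply/setXP; split; first by rewrite inE.
  rewrite inE; apply/andP; split.
    by apply/injectiveP => x y dxy; apply: finj; rewrite -!dE dxy.
  apply/forallP => x; apply/forallP => y; rewrite -fE -!dE e_iter //.
    by apply: leq_trans (ltn_ord _) Ik.
  by apply: leq_trans (ltn_ord _) Ik.
rewrite /gemb encS card_in_imset // cardsX cardsT.
by [].
Qed.
End B.


Lemma gemb_zero (T : finType) (e : rel T) (I : finType) (p : ptn I) x :
  ~~ (p (x, x)).1 -> gemb e p = 0.
Proof.
move=> px; apply/eqP; rewrite cards_eq0; apply/eqP/setP => f; rewrite !inE.
by apply: contraNF px => /eqP <-; rewrite ffunE /= eqxx.
Qed.

Lemma gemb_empty (T : finType) (e : rel T) (I : finType) (p : ptn I) :
  #|I| = 0 -> gemb e p = 1.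
Proof.
move=> I0; have nI (x : I) : False by have := card0_eq I0 x; rewrite !inE.
rewrite /gemb (_ : [set f | _] = setT); last first.
  apply/setP => f; rewrite !inE; apply/eqP/ffunP => [[x y]]; case: (nI x).
by rewrite cardsT card_ffun I0.
Qed.

Definition nf (I : finType) (p : ptn I) := #|[set xy | ~~ (p xy).2]|.

Section Two.
Variables (T1 T2 : finType) (e1 : rel T1) (e2 : rel T2) (sg1 : T1 -> T1) (sg2 : T2 -> T2) (k : nat).
Hypotheses (sginj1 : injective sg1) (hord1 : forall x, k < order sg1 x)
  (he1 : forall x y, e1 x y = (y == sg1 x) || (x == sg1 y)).
Hypotheses (sginj2 : injective sg2) (hord2 : forall x, k < order sg2 x)
  (he2 : forall x y, e2 x y = (y == sg2 x) || (x == sg2 y)).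
Hypothesis cT : #|T1| = #|T2|.

Lemma transfer (I : finType) (P : pred (ptn I)) :
  (forall q, P q -> gemb e1 q = gemb e2 q) ->
  #|[set f : {ffun I -> T1} | P (pat e1 f)]| = #|[set f : {ffun I -> T2} | P (pat e2 f)]|.
Proof. by move=> H; rewrite !gemb_part; apply: eq_bigr. Qed.

Section Step.
Variable (I : finType).
Hypothesis IH : forall J : finType, #|J| < #|I| -> forall q : ptn J, gemb e1 q = gemb e2 q.

Lemma del_case (p : ptn I) i j : i != j -> (p (i, j)).1 -> gemb e1 p = gemb e2 p.
Proof.
move=> hij pij; rewrite (gemb_del e1 hij pij) (gemb_del e2 hij pij).
apply: (transfer (P := fun q => Phi hij q == p)) => q _; apply: IH.
rewrite card_sig (@eq_card _ _ (predC1 j)) // cardC1 ltn_predL.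
by apply/card_gt0P; exists j.
Qed.

Lemma step (p : ptn I) : 0 < #|I| -> #|I| <= k ->
  (forall q : ptn I, nf q < nf p -> gemb e1 q = gemb e2 q) -> gemb e1 p = gemb e2 p.
Proof.
move=> I0 Ik IHin.
case: (boolP [exists x, exists y, (x != y) && (p (x, y)).1]).
  by case/existsP => x /existsP[y /andP[xy pxy]]; apply: del_case pxy.
move/existsPn => nd.
case: (boolP [exists x, ~~ (p (x, x)).1]).
  by case/existsP => x px; rewrite (gemb_zero e1 px) (gemb_zero e2 px).
move/existsPn => dg.
have pK x y : (p (x, y)).1 = (x == y).
  case: eqP => [<-|/eqP nxy]; first by have := dg x; rewrite negbK.
  by have /existsPn/(_ y) := nd x; rewrite nxy /= => /negPf.
case: (boolP (connb (fun x y => (p (x, y)).2))) => pC.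
  by rewrite (partB sginj1 hord1 he1 I0 Ik pK pC) (partB sginj2 hord2 he2 I0 Ik pK pC) cT.
move: pC; rewrite /connb => /forallPn[A]; rewrite negb_imply => /andP[/andP[A0 AT] nE].
have /set0Pn[a0 a0A] := A0.
have [b0 b0A] : exists b0, b0 \notin A.
  by apply/existsP; apply: contraNT AT => /existsPn H; apply/eqP/setP => x; have := H x; rewrite negbK inE => ->.
have cross x y : x \in A -> y \notin A -> ~~ (p (x, y)).2 && ~~ (p (y, x)).2.
  move=> xA yA; have /existsPn/(_ x)/existsPn/(_ y) := nE.
  by rewrite xA yA /= negb_or.
pose R (q : ptn I) := (restrA A q == restrA A p) && (restrB A q == restrB A p).
have Rp : R p by rewrite /R !eqxx.
have QQ : #|[set f : {ffun I -> T1} | R (pat e1 f)]| = #|[set f : {ffun I -> T2} | R (pat e2 f)]|.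
  have E1 : #|[set f : {ffun I -> T1} | R (pat e1 f)]| =
     #|[set g : {ffun IA A -> T1} | pat e1 g == restrA A p]| * #|[set h : {ffun IB A -> T1} | pat e1 h == restrB A p]|.
    rewrite -(card_split e1 a0A b0A (fun q => q == restrA A p) (fun q => q == restrB A p)).
    by apply: eq_card => f; rewrite !inE /R pat_resA pat_resB.
  have E2 : #|[set f : {ffun I -> T2} | R (pat e2 f)]| =
     #|[set g : {ffun IA A -> T2} | pat e2 g == restrA A p]| * #|[set h : {ffun IB A -> T2} | pat e2 h == restrB A p]|.
    rewrite -(card_split e2 a0A b0A (fun q => q == restrA A p) (fun q => q == restrB A p)).
    by apply: eq_card => f; rewrite !inE /R pat_resA pat_resB.
  rewrite E1 E2; congr (_ * _); apply: IH.
    rewrite card_sig (@eq_card _ _ A) // -cardsT; apply: proper_card; by rewrite properT.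
  rewrite card_sig (@eq_card _ _ (~: A)); last by move=> x; rewrite !inE.
  by rewrite -(cardsC A) -{1}(add0n #|~: A|) ltn_add2r card_gt0.
have others q : R q -> q != p -> gemb e1 q = gemb e2 q.
  move=> /andP[/eqP RA /eqP RB] qp.
  case: (boolP [exists x, exists y, (x != y) && (q (x, y)).1]).
    by case/existsP => x /existsP[y /andP[xy qxy]]; apply: del_case qxy.
  move/existsPn => ndq.
  case: (boolP [exists x, ~~ (q (x, x)).1]).
    by case/existsP => x qx; rewrite (gemb_zero e1 qx) (gemb_zero e2 qx).
  move/existsPn => dgq.
  have qK x y : (q (x, y)).1 = (x == y).
    case: eqP => [<-|/eqP nxy]; first by have := dgq x; rewrite negbK.
    by have /existsPn/(_ y) := ndq x; rewrite nxy /= => /negPf.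
  have same x y : (x \in A) = (y \in A) -> q (x, y) = p (x, y).
    case: (boolP (x \in A)) => xA; case: (boolP (y \in A)) => yA // _.
      have := congr1 (fun r : ptn (IA A) => r (exist _ x xA, exist _ y yA)) RA.
      by rewrite !ffunE.
    have := congr1 (fun r : ptn (IB A) => r (exist _ x xA, exist _ y yA)) RB.
    by rewrite !ffunE.
  apply: IHin; apply: proper_card; rewrite properE; apply/andP; split.
    apply/subsetP => [[x y]]; rewrite !inE.
    case: (boolP ((x \in A) == (y \in A))) => [/eqP/same -> //|xy _].
    case: (boolP (x \in A)) xy => xA; case: (boolP (y \in A)) => yA //= _.
      by case/andP: (cross x y xA yA).
    by case/andP: (cross y x yA xA).
  have [[x y] nxy] : exists xy, q xy != p xy.
    by apply/existsP; apply: contraNT qp => /existsPn H; apply/eqP/ffunP => xy; have := H xy; rewrite negbK => /eqP.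
  have xyA : (x \in A) != (y \in A) by apply: contra nxy => /eqP/same ->.
  have pxy : ~~ (p (x, y)).2.
    case: (boolP (x \in A)) xyA => xA; case: (boolP (y \in A)) => yA //= _.
      by case/andP: (cross x y xA yA).
    by case/andP: (cross y x yA xA).
  apply/subsetPn; exists (x, y); rewrite !inE.
    exact: pxy.
  rewrite negbK; apply: contraR nxy => qxy.
  move: (qK x y) (pK x y) qxy pxy; case: (q (x, y)) => [b1 b2]; case: (p (x, y)) => [c1 c2] /= -> ->.
  by case: b2; case: c2.
move: QQ; rewrite (gemb_part e1 R) (gemb_part e2 R) (bigD1 p Rp) (bigD1 p Rp) /=.
rewrite (eq_bigr (fun q => gemb e2 q)); last by move=> q /andP[Rq qp]; apply: others.
by move/eqP; rewrite eqn_add2r => /eqP.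
Qed.
End Step.

Theorem gemb_eq (I : finType) : #|I| <= k -> forall p : ptn I, gemb e1 p = gemb e2 p.
Proof.
suff H : forall m (J : finType), #|J| <= m -> #|J| <= k -> forall p : ptn J, gemb e1 p = gemb e2 p.
  by move=> Ik; exact: H _ _ (leqnn _) Ik.
elim=> [|m IHm] J Jm Jk p.
  have J0 : #|J| = 0 by apply/eqP; rewrite -leqn0.
  by rewrite !gemb_empty.
case: (ltnP #|J| m.+1) => [Jlt|Jge].
  exact: IHm Jlt Jk p.
have JE : #|J| = m.+1 by apply/eqP; rewrite eqn_leq Jm Jge.
have IH : forall J' : finType, #|J'| < #|J| -> forall q : ptn J', gemb e1 q = gemb e2 q.
  move=> J' hJ' q; apply: IHm; first by rewrite -ltnS -JE.
  exact: leq_trans (ltnW hJ') Jk.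
suff H : forall n (q : ptn J), nf q < n -> gemb e1 q = gemb e2 q by exact: H _ p (ltnSn _).
elim=> [//|n IHn] q hq.
apply: (step IH) => //; first by rewrite JE.
move=> q' hq'; apply: IHn; exact: leq_trans hq' hq.
Qed.
End Two.

Theorem corollary3p4 (k n : nat) (hk : 0 < k) (hn : 0 < n)
  (e1 e2 : rel 'I_n) :
  simple_graph e1 -> simple_graph e2 ->
  cycles_at_least e1 k -> cycles_at_least e2 k ->
  same_k_deck e1 e2 k.
Proof.
move=> s1 s2 c1 c2 h.
have [sg1 [i1 o1 a1]] := partA s1 c1.
have [sg2 [i2 o2 a2]] := partA s2 c2.
have Ik : #|'I_k| <= k by rewrite card_ord.
have E := gemb_eq i1 o1 a1 i2 o2 a2 (erefl _) Ik (pD h).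
rewrite !gemb_deck in E.
have Apos : 0 < #|Aut h|.
  apply/card_gt0P; exists [ffun i => i]; rewrite inE; apply/andP; split.
    by apply/injectiveP => x y; rewrite !ffunE.
  by apply/forallP => x; apply/forallP => y; rewrite !ffunE.
by apply/eqP; rewrite -(eqn_pmul2r Apos) E.
Qed.
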